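(* Consider the fixed cost inverse fractional knapsack problem under the $l_1$-norm (defined in the context). If it has an optimal solution, then there exists an optimal solution $(u,v)$ with $v_i=0$ for all $i\in I^1$ and $u_i=0$ for all $i\in I^0$, i.e., profits are only increased for items with $x^*_i=1$ and only reduced for items with $x^*_i=0$.
   Context: Given positive integers $p_i,c_i$ ($i=1,\dots,n$), a budget $b$, and a vector $x^*\in\{0,1\}^n$ with $\sum_{i=1}^n c_i x^*_i=b$. Let $I^1=\{i:x^*_i=1\}$ and $I^0=\{i:x^*_i=0\}$. Given nonnegative integer bounds $\bar u_i,\bar v_i$ and nonnegative weights $w_i$. A feasible modification is $(u,v)$ with $u_i\in[0,\bar u_i]\cap\mathbb Z$, $v_i\in[0,\bar v_i]\cap\mathbb Z$, giving modified profits $\tilde p_i=p_i+u_i-v_i$; costs $c_i$ are not modified. The fixed cost inverse fractional knapsack problem asks for a feasible modification such that $x^*$ is an optimal solution of $\max\{\sum_i\tilde p_i x_i:\sum_i c_ix_i\le b,\ x_i\in[0,1]\}$ and $\sum_{i=1}^n w_i(u_i+v_i)$ is minimal. *)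

(* Defs.v *)
From mathcomp Require Import all_boot all_order all_algebra.
Set Implicit Arguments. Unset Strict Implicit. Unset Printing Implicit Defensive.
Import Order.TTheory GRing.Theory Num.Theory.
Local Open Scope ring_scope.

Definition mod_profit (R : realFieldType) (n : nat) (p u v : 'I_n -> nat) (i : 'I_n) : R :=
  (p i)%:R + (u i)%:R - (v i)%:R.

Definition frac_feasible (R : realFieldType) (n : nat) (c : 'I_n -> nat) (b : nat)
  (x : 'I_n -> R) : Prop :=
  (forall i, 0 <= x i <= 1) /\ \sum_(i < n) (c i)%:R * x i <= b%:R.

Definition bvec (R : realFieldType) (n : nat) (xs : 'I_n -> bool) : 'I_n -> R :=
  fun i => (xs i : nat)%:R.

Definition frac_optimal (R : realFieldType) (n : nat) (pt : 'I_n -> R) (c : 'I_n -> nat)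
  (b : nat) (xs : 'I_n -> bool) : Prop :=
  frac_feasible c b (bvec R xs) /\
  forall x : 'I_n -> R, frac_feasible c b x ->
    \sum_(i < n) pt i * x i <= \sum_(i < n) pt i * bvec R xs i.

Definition inv_feasible (R : realFieldType) (n : nat) (p c : 'I_n -> nat) (b : nat)
  (xs : 'I_n -> bool) (ub vb : 'I_n -> nat) (u v : 'I_n -> nat) : Prop :=
  (forall i, (u i <= ub i)%N /\ (v i <= vb i)%N) /\
  frac_optimal (mod_profit R p u v) c b xs.

Definition inv_cost (R : realFieldType) (n : nat) (w : 'I_n -> R) (u v : 'I_n -> nat) : R :=
  \sum_(i < n) w i * ((u i)%:R + (v i)%:R).

Definition inv_optimal (R : realFieldType) (n : nat) (p c : 'I_n -> nat) (b : nat)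
  (xs : 'I_n -> bool) (ub vb : 'I_n -> nat) (w : 'I_n -> R) (u v : 'I_n -> nat) : Prop :=
  inv_feasible R p c b xs ub vb u v /\
  forall u' v' : 'I_n -> nat, inv_feasible R p c b xs ub vb u' v' ->
    inv_cost w u v <= inv_cost w u' v'.

(* Main.v *)
Require Import Defs.
From mathcomp Require Import all_boot all_order all_algebra.
From mathcomp Require Import ring lra zify.
Import Order.TTheory GRing.Theory Num.Theory.
Local Open Scope ring_scope.

Lemma natrB' (R : realFieldType) (a b : nat) : (a%:R - b%:R : R) <= (a - b)%N%:R.
Proof.
case: (leqP b a) => h.
  by rewrite natrB.
have -> : (a - b)%N = 0%N by apply/eqP; rewrite subn_eq0 ltnW.
by rewrite subr_le0 ler_nat ltnW.
Qed.

Theorem mainTheorem2 (R : realFieldType) (n : nat)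
  (p c : 'I_n -> nat) (b : nat) (xs : 'I_n -> bool)
  (ub vb : 'I_n -> nat) (w : 'I_n -> R) :
  (forall i, (0 < p i)%N) -> (forall i, (0 < c i)%N) ->
  (\sum_(i < n) c i * xs i)%N = b ->
  (forall i, 0 <= w i) ->
  (exists u v, inv_optimal p c b xs ub vb w u v) ->
  exists u v, inv_optimal p c b xs ub vb w u v /\
    (forall i, xs i -> v i = 0%N) /\ (forall i, ~~ xs i -> u i = 0%N).
Proof.
move=> _ _ _ hw [u [v [[hb [hfeas hopt]] hmin]]].
pose u' := fun i => if xs i then (u i - v i)%N else 0%N.
pose v' := fun i => if xs i then 0%N else (v i - u i)%N.
set pt := mod_profit R p u v.
set pt' := mod_profit R p u' v'.
have hd : forall i (x : R), 0 <= x <= 1 ->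
    (pt' i - pt i) * x <= (pt' i - pt i) * bvec R xs i.
  move=> i x /andP [x0 x1].
  rewrite /pt' /pt /mod_profit /bvec /u' /v'.
  case: (xs i) => /=.
    have := natrB' R (u i) (v i).
    set d := ((u i - v i)%N%:R : R) => hd.
    rewrite mulr1; nra.
  have := natrB' R (v i) (u i).
  set d := ((v i - u i)%N%:R : R) => hd.
  rewrite mulr0; nra.
have feas' : inv_feasible R p c b xs ub vb u' v'.
  split.
    move=> i; have [h1 h2] := hb i; rewrite /u' /v'.
    case: (xs i); split; lia.
  split => // x hx.
  have e : forall y : 'I_n -> R, \sum_(i < n) pt' i * y i =
      \sum_(i < n) pt i * y i + \sum_(i < n) (pt' i - pt i) * y i.
    move=> y; rewrite -big_split /=; apply: eq_bigr => i _; ring.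
  rewrite !e; apply: lerD; first exact: hopt.
  by apply: ler_sum => i _; apply: hd; case: hx => hx _; exact: hx.
exists u', v'; split; last first.
  split=> i; rewrite /u' /v'; first by move=> ->.
  by move/negbTE=> ->.
split => // u2 v2 h2.
apply: le_trans (hmin _ _ h2).
rewrite /inv_cost; apply: ler_sum => i _; apply: ler_wpM2l => //.
rewrite /u' /v'; case: (xs i); rewrite -!natrD ler_nat.
  by rewrite addn0 (leq_trans (leq_subr _ _)) // leq_addr.
by rewrite add0n (leq_trans (leq_subr _ _)) // leq_addl.
Qed.
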